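(* Consider the $2$-peakon dynamical system on the $6$-dimensional phase space with coordinates $(a_1,a_2,b_1,b_2,q_1,q_2)$, with Hamiltonian $h=2(a_1+a_2+b_1+b_2)$ and Poisson bracket defined, for $j,k\in\{1,2\}$, by $$\{a_j,a_k\}=2a_ja_k\,\mathrm{sgn}(q_j-q_k)e^{-|q_j-q_k|},\quad \{b_j,b_k\}=\tfrac12 b_jb_k\,\mathrm{sgn}(q_j-q_k)e^{-|q_j-q_k|},$$ $$\{q_j,q_k\}=\tfrac12\mathrm{sgn}(q_j-q_k)\big(1-e^{-|q_j-q_k|}\big),\quad \{q_j,a_k\}=a_ke^{-|q_j-q_k|},\quad \{q_j,b_k\}=\tfrac12 b_ke^{-|q_j-q_k|},$$ $$\{a_j,b_k\}=a_jb_k\,\mathrm{sgn}(q_j-q_k)e^{-|q_j-q_k|}$$ (remaining brackets by antisymmetry). Then the function $J=b_1b_2\big(1-e^{-|q_1-q_2|}\big)$ is independent of $h$ and the Casimirs $\mathcal C_j=a_j/b_j^2$, and satisfies $\{J,h\}=0$; consequently this $2$-peakon system is completely integrable in the Liouville sense.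
   Context: This system describes $2$-peakon solutions $u=\sum_{j=1}^2 a_je^{-|x-q_j|}$, $v=\sum_{j=1}^2 b_je^{-|x-q_j|}$ of the Popowicz system $m_t+m_x(2u+v)+3m(2u_x+v_x)=0$, $n_t+n_x(2u+v)+2n(2u_x+v_x)=0$, $m=u-u_{xx}$, $n=v-v_{xx}$. Convention: $\mathrm{sgn}(0)=0$. The bracket is extended to functions by bilinearity, antisymmetry and the Leibniz rule; $\mathcal C_1,\mathcal C_2$ are Casimirs (Poisson-commute with every function), so the motion is on $4$-dimensional symplectic leaves. *)

(* Defs.v *)
From Stdlib Require Import Reals.
From Coquelicot Require Import Coquelicot.
Open Scope R_scope.

(* Phase point: p : nat -> R, only coordinates 0..5 are used:
   p 0 = a_1, p 1 = a_2, p 2 = b_1, p 3 = b_2, p 4 = q_1, p 5 = q_2. *)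
Definition pt := nat -> R.

Definition a (p : pt) (k : nat) : R := p k.
Definition b (p : pt) (k : nat) : R := p (2 + k)%nat.
Definition q (p : pt) (k : nat) : R := p (4 + k)%nat.

Definition sgn (x : R) : R :=
  if Rlt_dec 0 x then 1 else if Rlt_dec x 0 then -1 else 0.

Definition Ex (p : pt) (k l : nat) : R := exp (- Rabs (q p k - q p l)).
Definition Sg (p : pt) (k l : nat) : R := sgn (q p k - q p l).

(* Structure matrix Pi p i j = {x_i, x_j}(p) of the Poisson bracket on the
   coordinate functions, with "class" i/2 (0 = a, 1 = b, 2 = q) and
   particle index i mod 2. *)
Definition Pi (p : pt) (i j : nat) : R :=
  let k := Nat.modulo i 2 in
  let l := Nat.modulo j 2 in
  match Nat.div i 2, Nat.div j 2 with
  | 0, 0 => 2 * a p k * a p l * Sg p k l * Ex p k l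
  | 1, 1 => / 2 * b p k * b p l * Sg p k l * Ex p k l
  | 2, 2 => / 2 * Sg p k l * (1 - Ex p k l)
  | 2, 0 => a p l * Ex p k l
  | 0, 2 => - (a p k * Ex p l k)
  | 2, 1 => / 2 * b p l * Ex p k l
  | 1, 2 => - (/ 2 * b p k * Ex p l k)
  | 0, 1 => a p k * b p l * Sg p k l * Ex p k l
  | 1, 0 => - (a p l * b p k * Sg p l k * Ex p l k)
  | _, _ => 0
  end.

Definition upd (p : pt) (i : nat) (t : R) : pt :=
  fun k => if Nat.eqb k i then t else p k.

Definition pd (F : pt -> R) (i : nat) (p : pt) : R :=
  Derive (fun t => F (upd p i t)) (p i).

(* Poisson bracket of functions (bilinearity + antisymmetry + Leibniz):
   {F,G} = sum_{i,j} dF/dx_i {x_i,x_j} dG/dx_j *)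
Definition bracket (F G : pt -> R) (p : pt) : R :=
  sum_f_R0 (fun i => sum_f_R0 (fun j => pd F i p * Pi p i j * pd G j p) 5) 5.

Definition ham (p : pt) : R := 2 * (a p 0 + a p 1 + b p 0 + b p 1).
Definition Jf (p : pt) : R := b p 0 * b p 1 * (1 - exp (- Rabs (q p 0 - q p 1))).
Definition Cas1 (p : pt) : R := a p 0 / (b p 0 ^ 2).
Definition Cas2 (p : pt) : R := a p 1 / (b p 1 ^ 2).

(* Domain: Casimirs defined (b_j <> 0), J smooth (q_1 <> q_2). *)
Definition Dom (p : pt) : Prop := b p 0 <> 0 /\ b p 1 <> 0 /\ q p 0 <> q p 1.

Definition indep4 (F1 F2 F3 F4 : pt -> R) (p : pt) : Prop :=
  forall c1 c2 c3 c4 : R,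
    (forall i : nat, (i < 6)%nat ->
       c1 * pd F1 i p + c2 * pd F2 i p + c3 * pd F3 i p + c4 * pd F4 i p = 0) ->
    c1 = 0 /\ c2 = 0 /\ c3 = 0 /\ c4 = 0.

(* functional independence: differentials independent on a dense subset of
   the domain (openness is automatic by continuity of the differentials). *)
Definition func_indep4 (F1 F2 F3 F4 : pt -> R) : Prop :=
  forall p : pt, Dom p -> forall eps : R, 0 < eps ->
    exists p' : pt, Dom p' /\ (forall k : nat, (k < 6)%nat -> Rabs (p' k - p k) < eps)
      /\ indep4 F1 F2 F3 F4 p'.

Definition casimir (C : pt -> R) : Prop :=
  forall (F : pt -> R) (p : pt), Dom p -> bracket C F p = 0.

(* Main.v *)
Require Import Defs.
From Stdlib Require Import Reals Lra Lia.
From Coquelicot Require Import Coquelicot.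
Open Scope R_scope.

Lemma sign_sgn x : sign x = sgn x.
Proof.
  unfold sgn. destruct (Rlt_dec 0 x). now apply sign_eq_1.
  destruct (Rlt_dec x 0). now apply sign_eq_m1.
  replace x with 0 by lra. apply sign_0.
Qed.

Lemma Sg_refl p k : Sg p k k = 0.
Proof. unfold Sg, sgn. rewrite Rminus_diag. destruct (Rlt_dec 0 0); [lra|]. destruct (Rlt_dec 0 0); lra. Qed.
Lemma Sg_anti p : Sg p 1 0 = - Sg p 0 1.
Proof. unfold Sg. rewrite <- !sign_sgn. rewrite <- sign_opp. f_equal. ring. Qed.
Lemma Ex_refl p k : Ex p k k = 1.
Proof. unfold Ex. rewrite Rminus_diag, Rabs_R0, Ropp_0. apply exp_0. Qed.
Lemma Ex_sym p : Ex p 1 0 = Ex p 0 1.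
Proof. unfold Ex. now rewrite Rabs_minus_sym. Qed.

Ltac pdt F := intros; unfold pd, upd, F, a, b, q; cbn [Nat.eqb Nat.add];
  apply is_derive_unique; auto_derive;
  unfold Sg, Ex, q, a, b in *; repeat split; try rewrite sign_sgn; try field; auto;
  try (match goal with H : Dom _ |- _ => destruct H as [? [? ?]] end; unfold a, b, q in *; cbn [Nat.add] in *; auto;
       try (intro; lra); try field; auto); try (unfold Rminus; ring).

Lemma pdh0 p : pd ham 0 p = 2. Proof. pdt ham. Qed.
Lemma pdh1 p : pd ham 1 p = 2. Proof. pdt ham. Qed.
Lemma pdh2 p : pd ham 2 p = 2. Proof. pdt ham. Qed.
Lemma pdh3 p : pd ham 3 p = 2. Proof. pdt ham. Qed.
Lemma pdh4 p : pd ham 4 p = 0. Proof. pdt ham. Qed.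
Lemma pdh5 p : pd ham 5 p = 0. Proof. pdt ham. Qed.

Lemma pdc10 p : Dom p -> pd Cas1 0 p = / (b p 0 ^ 2). Proof. pdt Cas1. Qed.
Lemma pdc11 p : Dom p -> pd Cas1 1 p = 0. Proof. pdt Cas1. Qed.
Lemma pdc12 p : Dom p -> pd Cas1 2 p = -2 * a p 0 / b p 0 ^ 3. Proof. pdt Cas1. Qed.
Lemma pdc13 p : Dom p -> pd Cas1 3 p = 0. Proof. pdt Cas1. Qed.
Lemma pdc14 p : Dom p -> pd Cas1 4 p = 0. Proof. pdt Cas1. Qed.
Lemma pdc15 p : Dom p -> pd Cas1 5 p = 0. Proof. pdt Cas1. Qed.
Lemma pdc20 p : Dom p -> pd Cas2 0 p = 0. Proof. pdt Cas2. Qed.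
Lemma pdc21 p : Dom p -> pd Cas2 1 p = / (b p 1 ^ 2). Proof. pdt Cas2. Qed.
Lemma pdc22 p : Dom p -> pd Cas2 2 p = 0. Proof. pdt Cas2. Qed.
Lemma pdc23 p : Dom p -> pd Cas2 3 p = -2 * a p 1 / b p 1 ^ 3. Proof. pdt Cas2. Qed.
Lemma pdc24 p : Dom p -> pd Cas2 4 p = 0. Proof. pdt Cas2. Qed.
Lemma pdc25 p : Dom p -> pd Cas2 5 p = 0. Proof. pdt Cas2. Qed.

Lemma pdj0 p : Dom p -> pd Jf 0 p = 0. Proof. pdt Jf. Qed.
Lemma pdj1 p : Dom p -> pd Jf 1 p = 0. Proof. pdt Jf. Qed.
Lemma pdj2 p : Dom p -> pd Jf 2 p = b p 1 * (1 - Ex p 0 1). Proof. pdt Jf. Qed.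
Lemma pdj3 p : Dom p -> pd Jf 3 p = b p 0 * (1 - Ex p 0 1). Proof. pdt Jf. Qed.
Lemma pdj4 p : Dom p -> pd Jf 4 p = b p 0 * b p 1 * Sg p 0 1 * Ex p 0 1. Proof. pdt Jf. Qed.
Lemma pdj5 p : Dom p -> pd Jf 5 p = - (b p 0 * b p 1 * Sg p 0 1 * Ex p 0 1). Proof. pdt Jf. Qed.

Ltac piv := cbv beta iota zeta delta [Pi Nat.div Nat.modulo Nat.divmod fst snd Nat.sub];
  rewrite ?Sg_refl, ?Ex_refl, ?Sg_anti, ?Ex_sym.

Lemma cas1 : casimir Cas1.
Proof.
  intros F p HD. pose proof HD as [Hb0 [Hb1 Hq]]. unfold bracket. cbn [sum_f_R0].
  rewrite pdc10, pdc11, pdc12, pdc13, pdc14, pdc15 by exact HD.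
  piv. field. exact Hb0.
Qed.
Lemma cas2 : casimir Cas2.
Proof.
  intros F p HD. pose proof HD as [Hb0 [Hb1 Hq]]. unfold bracket. cbn [sum_f_R0].
  rewrite pdc20, pdc21, pdc22, pdc23, pdc24, pdc25 by exact HD.
  piv. field. exact Hb1.
Qed.
Lemma jh p : Dom p -> bracket Jf ham p = 0.
Proof.
  intros HD. unfold bracket. cbn [sum_f_R0].
  rewrite pdj0, pdj1, pdj2, pdj3, pdj4, pdj5 by exact HD.
  rewrite pdh0, pdh1, pdh2, pdh3, pdh4, pdh5.
  piv. ring.
Qed.

Lemma Sg_nz p : Dom p -> Sg p 0 1 <> 0.
Proof.
  intros [_ [_ Hq]]. unfold Sg, sgn. destruct (Rlt_dec 0 _). lra.
  destruct (Rlt_dec _ 0). lra. exfalso. apply Hq. lra.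
Qed.

Lemma indep_at p : Dom p -> 2 * a p 0 + b p 0 <> 0 -> indep4 Jf ham Cas1 Cas2 p.
Proof.
  intros HD Hn c1 c2 c3 c4 H.
  pose proof HD as [Hb0 [Hb1 Hq]].
  pose proof (H 0%nat ltac:(lia)) as E0.
  pose proof (H 1%nat ltac:(lia)) as E1.
  pose proof (H 2%nat ltac:(lia)) as E2.
  pose proof (H 3%nat ltac:(lia)) as E3.
  pose proof (H 4%nat ltac:(lia)) as E4.
  rewrite pdj0, pdh0, pdc10, pdc20 in E0 by exact HD.
  rewrite pdj1, pdh1, pdc11, pdc21 in E1 by exact HD.
  rewrite pdj2, pdh2, pdc12, pdc22 in E2 by exact HD.
  rewrite pdj3, pdh3, pdc13, pdc23 in E3 by exact HD.
  rewrite pdj4, pdh4, pdc14, pdc24 in E4 by exact HD.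
  assert (c1 = 0).
  { assert (b p 0 * b p 1 * Sg p 0 1 * Ex p 0 1 <> 0).
    { pose proof (Sg_nz p HD). assert (Ex p 0 1 > 0) by (unfold Ex; apply exp_pos).
      repeat apply Rmult_integral_contrapositive_currified; lra. }
    apply (Rmult_eq_reg_r (b p 0 * b p 1 * Sg p 0 1 * Ex p 0 1)); [lra|auto]. }
  subst c1.
  assert (c2 * (2 * a p 0 + b p 0) = 0).
  { replace (c2 * (2 * a p 0 + b p 0)) with
      (b p 0 / 2 * (0 * (b p 1 * (1 - Ex p 0 1)) + c2 * 2 + c3 * (-2 * a p 0 / b p 0 ^ 3) + c4 * 0)
       + a p 0 * (0 * 0 + c2 * 2 + c3 * / b p 0 ^ 2 + c4 * 0)) by (field; auto).
    rewrite E0, E2. ring. }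
  assert (c2 = 0) by (destruct (Rmult_integral _ _ H0); auto; contradiction).
  subst c2.
  assert (c3 = 0).
  { replace c3 with (b p 0 ^ 2 * (0 * 0 + 0 * 2 + c3 * / b p 0 ^ 2 + c4 * 0)) by (field; auto).
    rewrite E0. ring. }
  assert (c4 = 0).
  { replace c4 with (b p 1 ^ 2 * (0 * 0 + 0 * 2 + c3 * 0 + c4 * / b p 1 ^ 2)) by (field; auto).
    rewrite E1. ring. }
  auto.
Qed.

Theorem mainTheorem2 :
  func_indep4 Jf ham Cas1 Cas2 /\
  (forall p : pt, Dom p -> bracket Jf ham p = 0) /\
  casimir Cas1 /\ casimir Cas2.
Proof.
  split; [|split; [exact jh|split; [exact cas1|exact cas2]]].
  intros p HD eps Heps.
  destruct (Req_dec (2 * a p 0 + b p 0) 0) as [Hz|Hz].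
  - exists (upd p 0 (p 0%nat + eps / 2)).
    assert (HD' : Dom (upd p 0 (p 0%nat + eps / 2))).
    { destruct HD as [? [? ?]]. unfold Dom, upd, a, b, q in *; cbn [Nat.eqb Nat.add] in *; auto. }
    split; [exact HD'|split].
    + intros k Hk. unfold upd. destruct (Nat.eqb k 0) eqn:E.
      * apply Nat.eqb_eq in E; subst k. replace (p 0%nat + eps / 2 - p 0%nat) with (eps/2) by ring.
        rewrite Rabs_pos_eq; lra.
      * rewrite Rminus_diag, Rabs_R0. exact Heps.
    + apply indep_at; [exact HD'|]. unfold a, b, upd in *; cbn [Nat.eqb Nat.add] in *. lra.
  - exists p. split; [exact HD|split].
    + intros k _. rewrite Rminus_diag, Rabs_R0. exact Heps.
    + apply indep_at; auto.
Qed.
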